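(* Let $f(z)=z+\sum_{k=2}^{\infty}a_kz^k$ be analytic in $\mathbb{D}=\{z:|z|<1\}$ with $zf'(z)-f(z)=\frac12 z^2\phi(z)$ for all $z\in\mathbb{D}$, where $\phi$ is analytic in $\mathbb{D}$ and $|\phi(z)|\le1$. Let $r_{\mathcal S}$ denote the positive root (in $(0,1)$) of \[(1-r)\ln(1-r)+2-3r=0.\] Then for every $n\ge2$ the partial sum $s_n(z;f)=z+\sum_{k=2}^n a_kz^k$ is close-to-convex in the disk $|z|<r_{\mathcal S}$.
   Context: A normalized analytic function $g$ is close-to-convex in a disk if there is a convex function $h$ there with $\mathrm{Re}(g'(z)/h'(z))>0$ in the disk (in particular this holds if $\mathrm{Re}\,g'(z)>0$ there). *)

(* Defs.v *)
(* Complex derivatives are Coquelicot's is_derive / ex_derive over C_AbsRing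
   (genuine complex differentiability); series are is_series in the complex
   normed module C_NormedModule. *)
From Stdlib Require Import Reals.
From Coquelicot Require Import Coquelicot.
Open Scope C_scope.

Definition disk (r : R) (z : C) : Prop := (Cmod z < r)%R.

Definition analytic_on_disk (r : R) (f : C -> C) : Prop :=
  forall z : C, disk r z -> ex_derive (K := C_AbsRing) (V := C_NormedModule) f z.

Definition convex_in_disk (r : R) (h : C -> C) : Prop :=
  analytic_on_disk r h /\
  (forall z w : C, disk r z -> disk r w -> h z = h w -> z = w) /\
  (forall (z w : C) (t : R), disk r z -> disk r w -> (0 <= t <= 1)%R ->
     exists u : C, disk r u /\
       h u = (RtoC (1 - t) * h z + RtoC t * h w)).

Definition close_to_convex_in_disk (r : R) (g : C -> C) : Prop :=
  exists h : C -> C, convex_in_disk r h /\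
    forall z : C, disk r z ->
      exists dg dh : C,
        is_derive (K := C_AbsRing) (V := C_NormedModule) g z dg /\
        is_derive (K := C_AbsRing) (V := C_NormedModule) h z dh /\
        (0 < Re (dg / dh))%R.

Definition partial_sum (a : nat -> C) (n : nat) (z : C) : C :=
  z + sum_n_m (fun k => a k * pow_n (K := C_Ring) z k) 2 n.

(* Main.v *)
Require Import Defs.
From Stdlib Require Import Reals Lra Lia Arith.
From Coquelicot Require Import Coquelicot.
Open Scope C_scope.

Section RealPart.
Local Open Scope R_scope.

Lemma ln_neg_lt1 (x : R) : 0 < x < 1 -> ln x < 0.
Proof. intros H. rewrite <- ln_1. apply ln_increasing; lra. Qed.

Lemma ln_gt_m3 (u : R) : 1/3 < u -> -3 < ln u.
Proof.
  intros H.
  assert (E: exp 3 > 4). { assert (H1 := exp_ineq1 3). lra. }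
  assert (Hp : 0 < exp 3) by apply exp_pos.
  assert (exp (Ropp 3) < 1/3).
  { rewrite exp_Ropp. apply (Rmult_lt_reg_r (exp 3)); auto.
    rewrite Rinv_l by lra. lra. }
  replace (-3) with (Ropp 3) by ring. rewrite <- (ln_exp (Ropp 3)). apply ln_increasing; auto. apply exp_pos. lra.
Qed.

Lemma rS_small (rS : R) : 0 < rS < 1 -> (1 - rS) * ln (1 - rS) + 2 - 3 * rS = 0 -> rS < 2/3.
Proof.
  intros H E. destruct (Rlt_or_le rS (2/3)) as [h|h]; auto.
  assert (ln (1 - rS) < 0) by (apply ln_neg_lt1; lra).
  assert ((1 - rS) * ln (1 - rS) < 0).
  { assert (0 < 1 - rS) by lra. nra. }
  lra.
Qed.

Lemma g_pos (rS r : R) : 0 < rS < 1 -> (1 - rS) * ln (1 - rS) + 2 - 3 * rS = 0 ->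
  0 <= r < rS -> 0 < (1 - r) * ln (1 - r) + 2 - 3 * r.
Proof.
  intros H E Hr. assert (h23 := rS_small rS H E).
  assert (Huv : 1 - rS < 1 - r) by lra.
  assert (Hv : 1/3 < 1 - rS) by lra.
  assert (l1 : -3 < ln (1 - r)) by (apply ln_gt_m3; lra).
  assert (l2 : ln (1 - rS) <= ln (1 - r)) by (apply ln_le; lra).
  assert (0 < ((1 - r) - (1 - rS)) * (3 + ln (1 - r))) by (apply Rmult_lt_0_compat; lra).
  assert (0 <= (1 - rS) * (ln (1 - r) - ln (1 - rS))) by (apply Rmult_le_pos; lra).
  nra.
Qed.
Lemma geom_sum_bound (r : R) (n : nat) : 0 <= r < 1 ->
  sum_n_m (fun k => r ^ (k - 1)) 2 n <= r / (1 - r).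
Proof.
  intros Hr.
  assert (Hpos : 0 <= r / (1 - r)) by (apply Rdiv_le_0_compat; lra).
  destruct n as [|n]. { rewrite sum_n_m_zero by lia. change (@zero R_AbelianMonoid) with 0. lra. }
  assert (E : forall n, (1 - r) * sum_n_m (fun k => r ^ (k - 1)) 2 (S n) = r - r ^ (S n)).
  { induction n0 as [|n0 IH].
    - rewrite sum_n_m_zero by lia. simpl. change (@zero R_AbelianMonoid) with 0. ring.
    - rewrite sum_n_Sm by lia. change (plus ?a ?b) with (a + b).
      rewrite Rmult_plus_distr_l, IH. replace (S (S n0) - 1)%nat with (S n0) by lia.
      simpl. ring. }
  specialize (E n).
  assert (0 <= r ^ S n) by (apply pow_le; lra).
  apply (Rmult_le_reg_l (1 - r)). lra.
  rewrite E. field_simplify; lra.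
Qed.

Lemma deriv_logsum (n : nat) (x : R) :
  is_derive (fun y => sum_n_m (fun k => y ^ (k - 1) / INR (k - 1)) 2 n) x
            (sum_n_m (fun k => x ^ (k - 2)) 2 n).
Proof.
  induction n as [|n IH].
  - rewrite sum_n_m_zero by lia. apply (is_derive_ext (fun _ => 0)).
    { intros t. rewrite sum_n_m_zero by lia. reflexivity. } exact (@is_derive_const R_AbsRing R_NormedModule 0 x).
  - destruct n as [|n].
    + rewrite sum_n_m_zero by lia. apply (is_derive_ext (fun _ => 0)).
      { intros t. rewrite sum_n_m_zero by lia. reflexivity. } exact (@is_derive_const R_AbsRing R_NormedModule 0 x).
    + rewrite (sum_n_Sm _ 2 (S n)) by lia.
      apply (is_derive_ext (fun t => plus (sum_n_m (fun k => t ^ (k - 1) / INR (k - 1)) 2 (S n)) (t ^ (S (S n) - 1) / INR (S (S n) - 1)))).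
      { intros t. rewrite (sum_n_Sm _ 2 (S n)) by lia. reflexivity. } apply (@is_derive_plus R_AbsRing R_NormedModule); [exact IH|].
      replace (S (S n) - 1)%nat with (S n) by lia.
      replace (S (S n) - 2)%nat with n by lia.
      assert (INR (S n) <> 0) by (apply not_0_INR; lia).
      auto_derive. auto. rewrite Rmult_1_l. simpl pred. field. auto.
Qed.

Lemma geom2 (x : R) (n : nat) :
  (1 - x) * sum_n_m (fun k => x ^ (k - 2)) 2 (S n) = 1 - x ^ n.
Proof.
  induction n as [|n IH].
  - rewrite sum_n_m_zero by lia. change (@zero R_AbelianMonoid) with 0. simpl. ring.
  - rewrite sum_n_Sm by lia. change (plus ?a ?b) with (a + b).
    rewrite Rmult_plus_distr_l, IH. replace (S (S n) - 2)%nat with n by lia.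
    simpl. ring.
Qed.

Lemma logsum_bound (r : R) (n : nat) : 0 <= r < 1 ->
  sum_n_m (fun k => r ^ (k - 1) / INR (k - 1)) 2 n <= - ln (1 - r).
Proof.
  intros Hr.
  set (F := fun y => - ln (1 - y) - sum_n_m (fun k => y ^ (k - 1) / INR (k - 1)) 2 n).
  set (dF := fun y => / (1 - y) - sum_n_m (fun k => y ^ (k - 2)) 2 n).
  assert (HD : forall y, y < 1 -> is_derive F y (dF y)).
  { intros y Hy. unfold F, dF.
    apply (@is_derive_minus R_AbsRing R_NormedModule).
    - auto_derive. lra. replace (1 + - y) with (1 - y) by ring. field. lra.
    - apply deriv_logsum. }
  destruct (MVT_gen F 0 r dF) as [c [Hc E]].
  - intros y Hy. apply HD. rewrite Rmax_right in Hy; lra.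
  - intros y Hy. apply continuity_pt_filterlim. apply (@ex_derive_continuous R_AbsRing R_NormedModule).
    eexists. apply HD. rewrite Rmax_right in Hy; lra.
  - rewrite Rmin_left in Hc by lra. rewrite Rmax_right in Hc by lra.
    assert (F0 : F 0 = 0).
    { unfold F. rewrite Rminus_0_r, ln_1.
      rewrite (sum_n_m_ext_loc _ (fun _ => 0)).
      + rewrite (@sum_n_m_const_zero R_AbelianMonoid). change (@zero R_AbelianMonoid) with 0. ring.
      + intros k Hk. replace (k - 1)%nat with (S (k - 2)) by lia. simpl. lra. }
    assert (dpos : 0 <= dF c).
    { unfold dF. destruct n as [|n].
      - rewrite sum_n_m_zero by lia. change (@zero R_AbelianMonoid) with 0.
        assert (0 < / (1 - c)) by (apply Rinv_0_lt_compat; lra). lra.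
      - assert (G := geom2 c n).
        assert (0 <= c ^ n) by (apply pow_le; lra).
        assert (E2 : sum_n_m (fun k => c ^ (k - 2)) 2 (S n) = (1 - c ^ n) / (1 - c)).
        { apply (Rmult_eq_reg_l (1 - c)); [| lra]. rewrite G. field. lra. }
        rewrite E2. replace (/ (1 - c) - (1 - c ^ n) / (1 - c)) with (c ^ n / (1 - c)) by (field; lra).
        apply Rdiv_le_0_compat; lra. }
    rewrite F0 in E. unfold F in E.
    assert (0 <= dF c * (r - 0)) by (apply Rmult_le_pos; lra). lra.
Qed.

Lemma final_real (rS r : R) (n : nat) : 0 < rS < 1 -> (1 - rS) * ln (1 - rS) + 2 - 3 * rS = 0 ->
  0 <= r < rS ->
  sum_n_m (fun k => INR k / (2 * INR (k - 1)) * r ^ (k - 1)) 2 n < 1.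
Proof.
  intros H E Hr.
  assert (Hg := g_pos rS r H E Hr).
  assert (Hr1 : 0 <= r < 1) by lra.
  rewrite (sum_n_m_ext_loc _ (fun k => mult (/ 2) (plus (r ^ (k - 1)) (r ^ (k - 1) / INR (k - 1))))).
  2: { intros k Hk. change (mult ?a ?b) with (a * b). change (plus ?a ?b) with (a + b).
       assert (INR (k - 1) <> 0) by (apply not_0_INR; lia).
       replace (INR k) with (INR (k - 1) + 1).
       2: { rewrite <- S_INR. f_equal. lia. }
       match goal with |- ?a = ?b => change (@eq R a b) end. field. auto. }
  rewrite (@sum_n_m_mult_l R_Ring). rewrite (@sum_n_m_plus R_AbelianMonoid).
  change (mult ?a ?b) with (a * b). change (plus ?a ?b) with (a + b).
  assert (A := geom_sum_bound r n Hr1).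
  assert (B := logsum_bound r n Hr1).
  assert (Key : r / (1 - r) - ln (1 - r) < 2).
  { apply (Rmult_lt_reg_l (1 - r)). lra.
    replace ((1 - r) * (r / (1 - r) - ln (1 - r))) with (r - (1 - r) * ln (1 - r)) by (field; lra).
    lra. }
  lra.
Qed.

End RealPart.

Ltac Cring := match goal with |- ?a = ?b => change (@eq C a b) end; ring.
Ltac Rring := match goal with |- ?a = ?b => change (@eq R a b) end; ring.

Notation P z k := (pow_n (K := C_Ring) z k).

Lemma P_mul (x y : C) (k : nat) : P (x * y) k = P x k * P y k.
Proof. induction k as [|k IH]; simpl. { change (one : C_Ring) with (RtoC 1). ring. }
  change (mult ?a ?b) with (a * b) in *. rewrite IH. ring. Qed.

Lemma P_add (x : C) (a b : nat) : P x (a + b) = P x a * P x b.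
Proof. exact (@pow_n_plus C_Ring x a b). Qed.

Lemma P_P (x : C) (a b : nat) : P (P x a) b = P x (a * b).
Proof. induction b as [|b IH]; simpl.
  - rewrite Nat.mul_0_r. reflexivity.
  - rewrite Nat.mul_succ_r, Nat.add_comm, P_add. change (mult ?u ?v) with (u * v). rewrite IH. ring.
Qed.

Lemma Cmod_P (x : C) (k : nat) : Cmod (P x k) = (Cmod x ^ k)%R.
Proof. induction k as [|k IH]; simpl. { change (one : C_Ring) with (RtoC 1). apply Cmod_1. }
  change (mult ?a ?b) with (a * b). rewrite Cmod_mult, IH. reflexivity. Qed.

Lemma P_R (r : R) (k : nat) : P (RtoC r) k = RtoC (r ^ k).
Proof. induction k as [|k IH]; simpl. reflexivity.
  change (mult ?a ?b) with (a * b). rewrite IH. rewrite RtoC_mult. reflexivity. Qed.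

Lemma P_1 (k : nat) : P (RtoC 1) k = RtoC 1.
Proof. rewrite P_R. rewrite pow1. reflexivity. Qed.

Lemma P_S (z : C) (k : nat) : P z (S k) = z * P z k.
Proof. reflexivity. Qed.

Lemma series_cv {K : AbsRing} {V : NormedModule K} (a : nat -> V) (l : V) :
  is_series a l -> forall eps : posreal, exists N, forall n, (N <= n)%nat ->
    (norm (minus (sum_n a n) l) < eps)%R.
Proof.
  intros H eps. unfold is_series in H.
  pose proof (proj1 (@filterlim_locally_ball_norm K nat V eventually _ (sum_n a) l) H) as H1. clear H. rename H1 into H.
  destruct (H eps) as [N HN]. exists N. intros n Hn. apply HN. exact Hn.
Qed.

Lemma Cseries_le (a : nat -> C) (l : C) (M : R) (N : nat) :
  is_series (V := C_NormedModule) a l ->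
  (forall n, (N <= n)%nat -> Cmod (sum_n a n) <= M)%R -> (Cmod l <= M)%R.
Proof.
  intros H HM. apply Rnot_lt_le. intros Hlt.
  assert (Hp : (0 < Cmod l - M)%R) by lra.
  destruct (series_cv a l H (mkposreal _ Hp)) as [N1 HN1].
  specialize (HN1 (max N N1) ltac:(lia)). specialize (HM (max N N1) ltac:(lia)).
  simpl in HN1. change norm with Cmod in HN1. change (minus ?x ?y) with (x - y) in HN1.
  assert (T := Cmod_triangle (sum_n a (max N N1)) (l - sum_n a (max N N1))).
  replace (sum_n a (max N N1) + (l - sum_n a (max N N1))) with l in T by ring.
  replace (l - sum_n a (max N N1)) with (- (sum_n a (max N N1) - l)) in T by ring.
  rewrite Cmod_opp in T.
  apply (Rlt_irrefl (Cmod l)). eapply Rle_lt_trans; [exact T|].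
  apply Rle_lt_trans with (M + Cmod (sum_n a (max N N1) - l))%R.
  - apply Rplus_le_compat_r. exact HM.
  - apply Rlt_le_trans with (M + (Cmod l - M))%R; [apply Rplus_lt_compat_l; exact HN1 | lra].
Qed.

Lemma Cseries_ge (a : nat -> C) (l : C) (M : R) (N : nat) :
  is_series (V := C_NormedModule) a l ->
  (forall n, (N <= n)%nat -> M <= Cmod (sum_n a n))%R -> (M <= Cmod l)%R.
Proof.
  intros H HM. apply Rnot_lt_le. intros Hlt.
  assert (Hp : (0 < M - Cmod l)%R) by lra.
  destruct (series_cv a l H (mkposreal _ Hp)) as [N1 HN1].
  specialize (HN1 (max N N1) ltac:(lia)). specialize (HM (max N N1) ltac:(lia)).
  simpl in HN1. change norm with Cmod in HN1. change (minus ?x ?y) with (x - y) in HN1.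
  assert (T := Cmod_triangle (sum_n a (max N N1) - l) l).
  assert (E : forall x y : C, x - y + y = x) by (intros; ring). rewrite E in T.
  apply (Rlt_irrefl M). eapply Rle_lt_trans; [exact HM|]. eapply Rle_lt_trans; [exact T|].
  apply Rlt_le_trans with ((M - Cmod l) + Cmod l)%R; [apply Rplus_lt_compat_r; exact HN1 | lra].
Qed.

Lemma Rseries_partial_le (b : nat -> R) (n : nat) :
  ex_series b -> (forall k, 0 <= b k)%R -> (sum_n b n <= Series b)%R.
Proof.
  intros Hb Hpos. apply Rnot_lt_le. intros Hlt.
  assert (Hp : (0 < sum_n b n - Series b)%R) by lra.
  destruct (series_cv b (Series b) (Series_correct _ Hb) (mkposreal _ Hp)) as [N1 HN1].
  specialize (HN1 (max n N1) ltac:(lia)). simpl in HN1.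
  change norm with Rabs in HN1. change (minus ?x ?y) with (x - y)%R in HN1.
  assert (Hm : (sum_n b n <= sum_n b (max n N1))%R).
  { destruct (Nat.eq_dec n (max n N1)) as [e|ne]. { rewrite <- e. lra. }
    unfold sum_n. rewrite (sum_n_m_Chasles b 0 n (max n N1)) by lia.
    change (plus ?x ?y) with (x + y)%R.
    assert (0 <= sum_n_m b (S n) (max n N1))%R.
    { clear -Hpos. induction (max n N1) as [|m IH].
      - rewrite sum_n_m_zero by lia. change (@zero R_AbelianMonoid) with 0%R. lra.
      - destruct (le_lt_dec (S n) (S m)).
        + rewrite sum_n_Sm by lia. change (plus ?x ?y) with (x + y)%R.
          specialize (Hpos (S m)). destruct (le_lt_dec (S n) m).
          * lra.
          * rewrite sum_n_m_zero by lia. change (@zero R_AbelianMonoid) with 0%R. lra.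
        + rewrite sum_n_m_zero by lia. change (@zero R_AbelianMonoid) with 0%R. lra. }
    lra. }
  apply Rabs_lt_between in HN1. change (@sum_n (NormedModule.AbelianMonoid R_AbsRing R_NormedModule) b) with (@sum_n R_AbelianMonoid b) in HN1. lra.
Qed.


Lemma deriv_quad (F : C -> C) (z l : C) (d K : R) : (0 < d)%R ->
  (forall w, Cmod (w - z) < d -> Cmod (F w - F z - (w - z) * l) <= K * Cmod (w - z) ^ 2)%R ->
  is_derive (K := C_AbsRing) (V := C_NormedModule) F z l.
Proof.
  intros Hd HK. split.
  - apply is_linear_scal_l.
  - intros x Hx. apply (@is_filter_lim_locally_unique C_AbsRing (AbsRing_NormedModule C_AbsRing)) in Hx. subst x.
    intros eps. apply (@locally_norm_le_locally C_AbsRing (AbsRing_NormedModule C_AbsRing) z).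
    assert (Hp : (0 < Rmin d (eps / (Rabs K + 1)))%R).
    { apply Rmin_pos; auto. apply Rdiv_lt_0_compat. apply cond_pos. pose proof (Rabs_pos K). lra. }
    exists (mkposreal _ Hp). intros y Hy. unfold ball_norm in Hy. simpl in Hy.
    change norm with Cmod in *. change (minus ?a ?b) with (a - b) in *.
    change (scal ?a ?b) with (a * b).
    assert (H1 : (Cmod (y - z) < d)%R) by (eapply Rlt_le_trans; [exact Hy| apply Rmin_l]).
    assert (H2 : (Cmod (y - z) < eps / (Rabs K + 1))%R) by (eapply Rlt_le_trans; [exact Hy| apply Rmin_r]).
    specialize (HK y H1).
    assert (H3 : (Cmod (y - z) * (Rabs K + 1) <= eps)%R).
    { pose proof (Rabs_pos K). apply Rlt_le.
      apply (Rmult_lt_compat_r (Rabs K + 1)) in H2; [|lra].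
      replace (eps / (Rabs K + 1) * (Rabs K + 1))%R with (pos eps) in H2 by (field; lra). exact H2. }
    pose proof (Cmod_ge_0 (y - z)). pose proof (Rle_abs K). pose proof (Rabs_pos K).
    eapply Rle_trans; [exact HK|]. nra.
Qed.

Lemma deriv_unique (F : C -> C) (z l1 l2 : C) :
  is_derive (K := C_AbsRing) (V := C_NormedModule) F z l1 ->
  is_derive (K := C_AbsRing) (V := C_NormedModule) F z l2 -> l1 = l2.
Proof.
  intros [_ H1] [_ H2].
  specialize (H1 z (fun P H => H)). specialize (H2 z (fun P H => H)).
  destruct (Ceq_dec l1 l2) as [e|ne]; auto. exfalso.
  assert (Hpos : (0 < Cmod (l1 - l2))%R) by (apply Cmod_gt_0; intro h; apply ne;
    replace l1 with (l1 - l2 + l2) by ring; rewrite h; ring).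
  set (eps := mkposreal _ (Rdiv_lt_0_compat _ 4 Hpos ltac:(lra))).
  specialize (H1 eps). specialize (H2 eps).
  apply (@locally_le_locally_norm C_AbsRing (AbsRing_NormedModule C_AbsRing)) in H1. apply (@locally_le_locally_norm C_AbsRing (AbsRing_NormedModule C_AbsRing)) in H2.
  destruct H1 as [e1 He1]. destruct H2 as [e2 He2].
  set (t := (Rmin e1 e2 / 2)%R).
  assert (Ht : (0 < t)%R) by (unfold t; apply Rdiv_lt_0_compat; [apply Rmin_pos; apply cond_pos| lra]).
  assert (Hb : forall e : posreal, (Rmin e1 e2 <= e)%R -> ball_norm z e (z + RtoC t)).
  { intros e He. unfold ball_norm. change norm with Cmod. change (minus ?a ?b) with (a - b).
    replace (z + RtoC t - z) with (RtoC t) by ring. rewrite Cmod_R, Rabs_pos_eq by lra.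
    unfold t. pose proof (Rmin_pos e1 e2 (cond_pos e1) (cond_pos e2)). lra. }
  specialize (He1 _ (Hb e1 (Rmin_l _ _))). specialize (He2 _ (Hb e2 (Rmin_r _ _))).
  change norm with Cmod in *. change (minus ?a ?b) with (a - b) in *. change (scal ?a ?b) with (a * b) in *.
  replace (z + RtoC t - z) with (RtoC t) in * by ring.
  rewrite Cmod_R, Rabs_pos_eq in He1, He2 by lra.
  assert (E : RtoC t * (l1 - l2) = (F (z + RtoC t) - F z - RtoC t * l2) + - (F (z + RtoC t) - F z - RtoC t * l1)) by ring.
  assert (T := Cmod_triangle (F (z + RtoC t) - F z - RtoC t * l2) (- (F (z + RtoC t) - F z - RtoC t * l1))).
  rewrite Cmod_opp in T. rewrite <- E in T. rewrite Cmod_mult, Cmod_R, Rabs_pos_eq in T by lra.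
  simpl in He1, He2. unfold eps in *; simpl in *.
  assert (He1' : (Cmod ((F (z + RtoC t) - F z - ((z + RtoC t) - z) * l1)%C) <= Cmod (l1 - l2) / 4 * t)%R) by exact He1.
  assert (He2' : (Cmod ((F (z + RtoC t) - F z - ((z + RtoC t) - z) * l2)%C) <= Cmod (l1 - l2) / 4 * t)%R) by exact He2.
  replace ((z + RtoC t) - z) with (RtoC t) in He1', He2' by ring.
  assert (t * Cmod (l1 - l2) <= 2 * (Cmod (l1 - l2) / 4 * t))%R by lra.
  nra.
Qed.


Definition Eterm (w z : C) (k : nat) : C :=
  P w k - P z k - RtoC (INR k) * (w - z) * P z (k - 1).

Lemma jpow (j : nat) (r : R) : (INR j * r ^ (j - 1) * r = INR j * r ^ j)%R.
Proof. destruct j. simpl. ring. replace (S j - 1)%nat with j by lia. simpl. ring. Qed.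

Lemma Ebound (w z : C) (r : R) (k : nat) : (Cmod w <= r)%R -> (Cmod z <= r)%R ->
  (Cmod (Eterm w z k) <= INR k * INR (k - 1) * r ^ (k - 2) * Cmod (w - z) ^ 2)%R.
Proof.
  intros Hw Hz. assert (Hr : (0 <= r)%R) by (pose proof (Cmod_ge_0 w); lra).
  induction k as [|k IH].
  - assert (E0 : Eterm w z 0 = RtoC 0).
    { unfold Eterm. simpl. change (one : C_Ring) with (RtoC 1). ring. }
    rewrite E0, Cmod_R, Rabs_R0. simpl; lra.
  - destruct k as [|j].
    + assert (E0 : Eterm w z 1 = RtoC 0).
      { unfold Eterm. simpl. change (one : C_Ring) with (RtoC 1). change (mult ?a ?b) with (a * b). ring. }
      rewrite E0, Cmod_R, Rabs_R0. simpl; lra.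
    + assert (Eq : Eterm w z (S (S j)) = w * Eterm w z (S j) + RtoC (INR (S j)) * (w - z) * (w - z) * P z j).
      { unfold Eterm. replace (S (S j) - 1)%nat with (S j) by lia. replace (S j - 1)%nat with j by lia.
        change (P w (S (S j))) with (w * (w * P w j)). change (P z (S (S j))) with (z * (z * P z j)). change (P w (S j)) with (w * P w j). change (P z (S j)) with (z * P z j). rewrite !S_INR, !RtoC_plus. ring. }
      rewrite Eq. replace (S (S j) - 1)%nat with (S j) in * by lia.
      replace (S (S j) - 2)%nat with j by lia.
      replace (S j - 1)%nat with j in IH by lia. replace (S j - 2)%nat with (j - 1)%nat in IH by lia.
      eapply Rle_trans; [apply Cmod_triangle|].
      rewrite !Cmod_mult, Cmod_R, Rabs_pos_eq by (apply pos_INR).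
      rewrite Cmod_P.
      set (d := Cmod (w - z)). assert (Hd : (0 <= d)%R) by apply Cmod_ge_0.
      assert (HE : (0 <= Cmod (Eterm w z (S j)))%R) by apply Cmod_ge_0.
      assert (Hzj : (Cmod z ^ j <= r ^ j)%R) by (apply pow_incr; split; [apply Cmod_ge_0|exact Hz]).
      assert (H1 : (Cmod w * Cmod (Eterm w z (S j)) <= r * (INR (S j) * INR j * r ^ (j - 1) * d ^ 2))%R).
      { apply Rmult_le_compat; auto. apply Cmod_ge_0. }
      assert (H2 : (r * (INR (S j) * INR j * r ^ (j - 1) * d ^ 2) = INR (S j) * (INR j * r ^ j) * d ^ 2)%R).
      { rewrite <- (jpow j r). ring. }
      assert (H3 : (INR (S j) * d * d * Cmod z ^ j <= INR (S j) * d * d * r ^ j)%R).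
      { apply Rmult_le_compat_l; auto. pose proof (pos_INR (S j)). apply Rmult_le_pos; [apply Rmult_le_pos|]; lra. }
      rewrite !S_INR in *. pose proof (pos_INR j). assert (0 <= r ^ j)%R by (apply pow_le; lra).
      eapply Rle_trans; [apply Rplus_le_compat; [exact H1|exact H3]|]. rewrite H2.
      assert (0 <= (INR j + 1) * r ^ j * d ^ 2)%R by (apply Rmult_le_pos; [apply Rmult_le_pos|]; nra).
      nra.
Qed.


Lemma sumC_lin (A B : nat -> C) (x y : C) (m n : nat) :
  sum_n_m (G := C_AbelianMonoid) (fun k => x * A k + y * B k) m n =
  x * sum_n_m (G := C_AbelianMonoid) A m n + y * sum_n_m (G := C_AbelianMonoid) B m n.
Proof.
  induction n as [|n IH].
  - destruct m.
    + rewrite !sum_n_n. reflexivity.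
    + rewrite !sum_n_m_zero by lia. change (@zero C_AbelianMonoid) with (RtoC 0). Cring.
  - destruct (le_lt_dec m n) as [h|h].
    + rewrite !sum_n_Sm by lia. rewrite IH. change (plus ?a ?b) with (a + b). Cring.
    + destruct (Nat.eq_dec m (S n)) as [e|e].
      * subst m. rewrite !sum_n_n. reflexivity.
      * rewrite !sum_n_m_zero by lia. change (@zero C_AbelianMonoid) with (RtoC 0). Cring.
Qed.

Lemma sumR_nonneg (b : nat -> R) (m n : nat) : (forall k, 0 <= b k)%R -> (0 <= sum_n_m b m n)%R.
Proof.
  intros H. eapply Rle_trans; [|apply (sum_n_m_le (fun _ => 0%R))]; auto.
  rewrite sum_n_m_const. lra.
Qed.

Lemma poly_deriv (c : nat -> C) (m n : nat) (z : C) :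
  is_derive (K := C_AbsRing) (V := C_NormedModule)
    (fun w => sum_n_m (G := C_AbelianMonoid) (fun k => c k * P w k) m n) z
    (sum_n_m (G := C_AbelianMonoid) (fun k => RtoC (INR k) * c k * P z (k - 1)) m n).
Proof.
  set (r := (Cmod z + 1)%R).
  apply (deriv_quad _ _ _ 1 (sum_n_m (fun k => Cmod (c k) * (INR k * INR (k - 1) * r ^ (k - 2)))%R m n)).
  { lra. }
  intros w Hw.
  assert (Hwr : (Cmod w <= r)%R).
  { unfold r. replace w with (z + (w - z)) by ring. eapply Rle_trans; [apply Cmod_triangle|]. lra. }
  assert (Hzr : (Cmod z <= r)%R) by (unfold r; lra).
  assert (E : sum_n_m (G := C_AbelianMonoid) (fun k => c k * P w k) m n -
              sum_n_m (G := C_AbelianMonoid) (fun k => c k * P z k) m n -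
              (w - z) * sum_n_m (G := C_AbelianMonoid) (fun k => RtoC (INR k) * c k * P z (k - 1)) m n
            = sum_n_m (G := C_AbelianMonoid) (fun k => c k * Eterm w z k) m n).
  { assert (E2 : sum_n_m (G := C_AbelianMonoid) (fun k => c k * Eterm w z k) m n =
      sum_n_m (G := C_AbelianMonoid) (fun k => RtoC 1 * (RtoC 1 * (c k * P w k) + (- RtoC 1) * (c k * P z k))
                                   + (- (w - z)) * (RtoC (INR k) * c k * P z (k - 1))) m n).
    { apply sum_n_m_ext. intros k. unfold Eterm. change (mult ?a ?b) with (a * b). Cring. }
    rewrite E2, sumC_lin, sumC_lin. Cring. }
  rewrite E.
  eapply Rle_trans; [apply (norm_sum_n_m (K := C_AbsRing) (V := C_NormedModule))|].
  change norm with Cmod.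
  rewrite Rmult_comm.
  rewrite <- (sum_n_m_mult_l (K := R_Ring)).
  apply sum_n_m_le. intros k. change (mult ?a ?b) with (a * b)%R.
  rewrite Cmod_mult. pose proof (Ebound w z r k Hwr Hzr). pose proof (Cmod_ge_0 (c k)).
  assert (Cmod (c k) * Cmod (Eterm w z k) <= Cmod (c k) * (INR k * INR (k - 1) * r ^ (k - 2) * Cmod (w - z) ^ 2))%R
    by (apply Rmult_le_compat_l; auto).
  lra.
Qed.


Lemma coef_bounded (a : nat -> C) (r : R) (s : C) :
  is_series (K := C_AbsRing) (V := C_NormedModule) (fun k => a k * P (RtoC r) k) s ->
  (0 <= r)%R -> exists M, forall k, (Cmod (a k) * r ^ k <= M)%R.
Proof.
  intros H Hr.
  destruct (@filterlim_bounded C_AbsRing C_NormedModule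
              (sum_n (fun k => a k * P (RtoC r) k))) as [M HM].
  { exists s. exact H. }
  exists (2 * M)%R. intros k.
  assert (Ht : forall k, Cmod (a k * P (RtoC r) k) = (Cmod (a k) * r ^ k)%R).
  { intros j. rewrite Cmod_mult, Cmod_P, Cmod_R, Rabs_pos_eq by lra. reflexivity. }
  rewrite <- Ht.
  assert (HM0 : (0 <= M)%R) by (eapply Rle_trans; [apply (@norm_ge_0 C_AbsRing C_NormedModule)|apply (HM 0%nat)]).
  destruct k as [|k].
  - specialize (HM 0%nat). unfold sum_n in HM. rewrite sum_n_n in HM. change norm with Cmod in HM. lra.
  - assert (E : a (S k) * P (RtoC r) (S k) =
       sum_n (G := C_AbelianMonoid) (fun k => a k * P (RtoC r) k) (S k) -
       sum_n (G := C_AbelianMonoid) (fun k => a k * P (RtoC r) k) k).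
    { unfold sum_n. rewrite sum_n_Sm by lia. change (plus ?x ?y) with (x + y). Cring. }
    rewrite E. eapply Rle_trans; [apply Cmod_triangle|]. rewrite Cmod_opp.
    pose proof (HM (S k)). pose proof (HM k). change norm with Cmod in *.
    apply Rle_trans with (M + M)%R; [apply Rplus_le_compat; assumption| lra].
Qed.

Lemma radius_ge_1 (a : nat -> C) (f : C -> C) :
  (forall z : C, disk 1 z -> is_series (K := C_AbsRing) (V := C_NormedModule) (fun k => a k * P z k) (f z)) ->
  Rbar_le 1 (CV_radius (fun k => Cmod (a k))).
Proof.
  intros hf.
  assert (Hr : forall r, (0 <= r < 1)%R -> Rbar_le r (CV_radius (fun k => Cmod (a k)))).
  { intros r Hr. destruct (CV_radius_bounded (fun k => Cmod (a k))) as [Hub _].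
    apply Hub. destruct (coef_bounded a r (f (RtoC r))) as [M HM].
    - apply hf. unfold disk. rewrite Cmod_R, Rabs_pos_eq; lra.
    - lra.
    - exists M. intros n. rewrite Rabs_pos_eq. apply HM.
      apply Rmult_le_pos. apply Cmod_ge_0. apply pow_le; lra. }
  pose proof (CV_radius_ge_0 (fun k => Cmod (a k))) as H0.
  destruct (CV_radius (fun k => Cmod (a k))) as [c| |] eqn:Ec; simpl in *; auto.
  apply Rnot_lt_le. intros Hc.
  specialize (Hr ((c + 1) / 2)%R ltac:(lra)). simpl in Hr. lra.
Qed.

Lemma abs_series1 (al : nat -> R) (rho : R) :
  (forall k, 0 <= al k)%R -> (0 <= rho < 1)%R -> Rbar_le 1 (CV_radius al) ->
  ex_series (fun k => INR k * al k * rho ^ (k - 1))%R.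
Proof.
  intros Hpos Hr Hrad.
  assert (Hlt : Rbar_lt (Rabs rho) (CV_radius (PS_derive al))).
  { rewrite CV_radius_derive. rewrite Rabs_pos_eq by lra.
    destruct (CV_radius al); simpl in *; auto; lra. }
  apply CV_disk_inside in Hlt.
  apply ex_series_incr_1.
  eapply ex_series_ext; [|exact Hlt].
  intros n. unfold PS_derive. rewrite Rabs_pos_eq.
  - replace (S n - 1)%nat with n by lia. Rring.
  - apply Rmult_le_pos; [apply Rmult_le_pos; [apply pos_INR|apply Hpos]|apply pow_le; lra].
Qed.

Lemma abs_series2 (al : nat -> R) (rho : R) :
  (forall k, 0 <= al k)%R -> (0 <= rho < 1)%R -> Rbar_le 1 (CV_radius al) ->
  ex_series (fun k => al k * (INR k * INR (k - 1) * rho ^ (k - 2)))%R.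
Proof.
  intros Hpos Hr Hrad.
  assert (Hlt : Rbar_lt (Rabs rho) (CV_radius (PS_derive (PS_derive al)))).
  { rewrite !CV_radius_derive. rewrite Rabs_pos_eq by lra.
    destruct (CV_radius al); simpl in *; auto; lra. }
  apply CV_disk_inside in Hlt.
  apply (ex_series_incr_n _ 2).
  eapply ex_series_ext; [|exact Hlt].
  intros n. unfold PS_derive. rewrite Rabs_pos_eq.
  - replace (2 + n - 1)%nat with (S n) by lia. replace (2 + n - 2)%nat with n by lia.
    replace (2 + n)%nat with (S (S n)) by lia. Rring.
  - pose proof (pos_INR (S n)). pose proof (pos_INR (S (S n))). pose proof (Hpos (S (S n))).
    assert (0 <= rho ^ n)%R by (apply pow_le; lra).
    apply Rmult_le_pos; [|auto]. apply Rmult_le_pos; [auto|]. apply Rmult_le_pos; auto.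
Qed.

Lemma deriv_series (a : nat -> C) (f : C -> C) :
  (forall z : C, disk 1 z -> is_series (K := C_AbsRing) (V := C_NormedModule) (fun k => a k * P z k) (f z)) ->
  forall z, (Cmod z < 1)%R -> exists Dz,
    is_series (K := C_AbsRing) (V := C_NormedModule) (fun k => RtoC (INR k) * a k * P z (k - 1)) Dz /\
    is_derive (K := C_AbsRing) (V := C_NormedModule) f z Dz.
Proof.
  intros hf z Hz.
  pose proof (radius_ge_1 a f hf) as Hrad.
  assert (Hpos : forall k, (0 <= Cmod (a k))%R) by (intros; apply Cmod_ge_0).
  assert (Hz0 := Cmod_ge_0 z).
  assert (Hex : ex_series (K := C_AbsRing) (V := C_NormedModule) (fun k => RtoC (INR k) * a k * P z (k - 1))).
  { apply (@ex_series_le C_AbsRing C_CompleteNormedModule _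
              (fun k => INR k * Cmod (a k) * Cmod z ^ (k - 1))%R).
    - intros k. change norm with Cmod. rewrite !Cmod_mult, Cmod_R, Cmod_P, Rabs_pos_eq by apply pos_INR. lra.
    - apply abs_series1; auto; lra. }
  destruct Hex as [Dz HD].
  exists Dz. split; [exact HD|].
  set (rho := ((1 + Cmod z) / 2)%R).
  assert (Hrho : (0 <= rho < 1)%R) by (unfold rho; lra).
  pose proof (abs_series2 _ rho Hpos Hrho Hrad) as Hb.
  set (b := (fun k => Cmod (a k) * (INR k * INR (k - 1) * rho ^ (k - 2)))%R) in Hb.
  apply (deriv_quad _ _ _ (rho - Cmod z) (Series b)).
  { unfold rho; lra. }
  intros w Hw.
  assert (Hwr : (Cmod w <= rho)%R).
  { replace w with (z + (w - z)) by ring. eapply Rle_trans; [apply Cmod_triangle|]. lra. }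
  assert (Hzr : (Cmod z <= rho)%R) by (unfold rho; lra).
  assert (HS : is_series (K := C_AbsRing) (V := C_NormedModule) (fun k => a k * Eterm w z k)
                 (f w - f z - (w - z) * Dz)).
  { eapply is_series_ext; [|exact (is_series_minus _ _ _ _ (is_series_minus _ _ _ _ (hf w ltac:(unfold disk; lra)) (hf z Hz)) (is_series_scal (w - z) _ _ HD))].
    intros k. unfold Eterm. change (plus ?x ?y) with (x + y). change (opp ?x) with (- x).
    change (scal ?x ?y) with (x * y). repeat change (plus ?x ?y) with (x + y). repeat change (opp ?x) with (- x). Cring. }
  rewrite Rmult_comm.
  apply (Cseries_le _ _ _ 0 HS). intros n _.
  eapply Rle_trans; [apply (norm_sum_n_m (K := C_AbsRing) (V := C_NormedModule))|].
  change norm with Cmod.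
  apply Rle_trans with (sum_n_m (fun k => mult (Cmod (w - z) ^ 2)%R (b k)) 0 n).
  - apply sum_n_m_le. intros k. change (mult ?x ?y) with (x * y)%R. unfold b.
    rewrite Cmod_mult. pose proof (Ebound w z rho k Hwr Hzr).
    assert (Cmod (a k) * Cmod (Eterm w z k) <= Cmod (a k) * (INR k * INR (k - 1) * rho ^ (k - 2) * Cmod (w - z) ^ 2))%R
      by (apply Rmult_le_compat_l; auto).
    lra.
  - rewrite (sum_n_m_mult_l (K := R_Ring)). change (mult ?x ?y) with (x * y)%R.
    apply Rmult_le_compat_l. apply pow2_ge_0.
    apply (Rseries_partial_le b n Hb). intros k. unfold b. pose proof (pos_INR k). pose proof (pos_INR (k-1)).
    apply Rmult_le_pos; auto. apply Rmult_le_pos; [apply Rmult_le_pos|apply pow_le]; lra.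
Qed.


Definition cis (t : R) : C := (cos t, sin t).

Lemma cis_mult (s t : R) : cis s * cis t = cis (s + t).
Proof. unfold cis, Cmult. simpl. rewrite cos_plus, sin_plus. f_equal; ring. Qed.

Lemma P_cis (t : R) (k : nat) : P (cis t) k = cis (INR k * t).
Proof.
  induction k as [|k IH].
  - simpl. unfold cis. rewrite Rmult_0_l, cos_0, sin_0. reflexivity.
  - rewrite P_S, IH, cis_mult, S_INR. f_equal. ring.
Qed.

Lemma Cmod_cis (t : R) : Cmod (cis t) = 1%R.
Proof. unfold Cmod, cis. cbn [fst snd].
  replace (cos t ^ 2 + sin t ^ 2)%R with 1%R by (pose proof (sin2_cos2 t); unfold Rsqr in *; nra).
  apply sqrt_1. Qed.

Lemma cos_lt_1 (x : R) : (0 < x < 2 * PI)%R -> (cos x < 1)%R.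
Proof.
  intros H. replace x with (2 * (x / 2))%R by field. rewrite cos_2a_sin.
  assert (0 < sin (x / 2))%R by (apply sin_gt_0; lra).
  nra.
Qed.

Definition omega (N : nat) : C := cis (2 * PI / INR N).

Lemma omega_N (N : nat) : (0 < N)%nat -> P (omega N) N = RtoC 1.
Proof.
  intros H. unfold omega. rewrite P_cis.
  replace (INR N * (2 * PI / INR N))%R with (2 * PI)%R.
  - unfold cis. rewrite cos_2PI, sin_2PI. reflexivity.
  - field. apply not_0_INR. lia.
Qed.

Lemma omega_ne1 (N q : nat) : (0 < q < N)%nat -> P (omega N) q <> RtoC 1.
Proof.
  intros H E. unfold omega in E. rewrite P_cis in E. unfold cis in E.
  injection E as E1 E2.
  assert (Hq : (0 < INR q)%R) by (apply lt_0_INR; lia).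
  assert (HqN : (INR q < INR N)%R) by (apply lt_INR; lia).
  assert (HN : (0 < INR N)%R) by lra.
  assert (0 < INR q * (2 * PI / INR N) < 2 * PI)%R.
  { pose proof PI_RGT_0. split.
    - apply Rmult_lt_0_compat; auto. apply Rdiv_lt_0_compat; lra.
    - apply (Rmult_lt_reg_r (INR N)); auto. field_simplify; [|lra]. nra. }
  pose proof (cos_lt_1 _ H0). lra.
Qed.

Lemma Cmod_omega_pow (N k : nat) : Cmod (P (omega N) k) = 1%R.
Proof. unfold omega. rewrite P_cis. apply Cmod_cis. Qed.

Lemma geomC (x : C) (n : nat) :
  (x - 1) * sum_n (G := C_AbelianMonoid) (fun j => P x j) n = P x (S n) - 1.
Proof.
  induction n as [|n IH].
  - unfold sum_n. rewrite sum_n_n. simpl. change (one : C_Ring) with (RtoC 1). change (mult ?a ?b) with (a * b). ring.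
  - unfold sum_n in *. rewrite sum_n_Sm by lia. change (plus ?a ?b) with (a + b).
    rewrite Cmult_plus_distr_l, IH. rewrite !P_S. ring.
Qed.

Definition Ssum (N q : nat) : C := sum_n (G := C_AbelianMonoid) (fun j => P (P (omega N) q) j) (N - 1).

Lemma Ssum_N (N q : nat) : (0 < N)%nat -> P (omega N) q = RtoC 1 -> Ssum N q = RtoC (INR N).
Proof.
  intros HN E. unfold Ssum. rewrite E.
  unfold sum_n. rewrite (sum_n_m_ext _ (fun _ => RtoC 1)) by (intros; apply P_1).
  clear E. induction N as [|N IH]; [lia|].
  destruct N as [|N].
  - rewrite sum_n_n. simpl. f_equal. 
  - replace (S (S N) - 1)%nat with (S (S N - 1)) by lia. rewrite sum_n_Sm by lia.
    rewrite IH by lia. change (plus ?a ?b) with (a + b). rewrite (S_INR (S N)). rewrite RtoC_plus. reflexivity.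
Qed.

Lemma Ssum_0 (N q : nat) : (0 < N)%nat -> P (omega N) q <> RtoC 1 -> Ssum N q = RtoC 0.
Proof.
  intros HN E. unfold Ssum.
  assert (G := geomC (P (omega N) q) (N - 1)).
  replace (S (N - 1)) with N in G by lia.
  rewrite P_P, Nat.mul_comm, <- P_P, omega_N in G by auto. rewrite P_1 in G.
  assert (Hne : P (omega N) q - 1 <> RtoC 0).
  { intro h. apply E. assert (X : forall u : C, u - 1 = RtoC 0 -> u = RtoC 1) by (intros u hu; replace u with (u - 1 + 1) by ring; rewrite hu; ring). apply X. exact h. }
  assert (Z : forall x S : C, x <> RtoC 0 -> x * S = RtoC 0 -> S = RtoC 0).
  { intros x S hx hS. replace S with (/ x * (x * S)) by (field; auto). rewrite hS. ring. }
  apply (Z _ _ Hne). rewrite G. ring.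
Qed.

Lemma Cmod_Ssum (N q : nat) : (0 < N)%nat -> (Cmod (Ssum N q) <= INR N)%R.
Proof.
  intros HN. unfold Ssum.
  eapply Rle_trans; [apply (norm_sum_n_m (K := C_AbsRing) (V := C_NormedModule))|].
  change norm with Cmod. rewrite (sum_n_m_ext _ (fun _ => 1%R)).
  - rewrite sum_n_m_const. replace (S (N - 1) - 0)%nat with N by lia. lra.
  - intros j. rewrite P_P. apply Cmod_omega_pow.
Qed.

Lemma series_fsum (u : nat -> nat -> C) (L : nat -> C) (n : nat) :
  (forall j, is_series (K := C_AbsRing) (V := C_NormedModule) (u j) (L j)) ->
  is_series (K := C_AbsRing) (V := C_NormedModule)
    (fun k => sum_n (G := C_AbelianMonoid) (fun j => u j k) n) (sum_n (G := C_AbelianMonoid) L n).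
Proof.
  intros H. induction n as [|n IH].
  - unfold sum_n. rewrite sum_n_n. eapply is_series_ext; [|apply (H 0%nat)].
    intros k. rewrite sum_n_n. reflexivity.
  - unfold sum_n in *. rewrite sum_n_Sm by lia.
    eapply is_series_ext; [|apply (is_series_plus _ _ _ _ IH (H (S n)))].
    intros k. rewrite (sum_n_Sm _ 0 n) by lia. reflexivity.
Qed.

Lemma sum_zero (f : nat -> C) (a n : nat) : (forall k, (a <= k <= n)%nat -> f k = RtoC 0) ->
  sum_n_m (G := C_AbelianMonoid) f a n = RtoC 0.
Proof.
  intros H. rewrite (sum_n_m_ext_loc _ (fun _ => zero)).
  - exact (@sum_n_m_const_zero C_AbelianMonoid a n).
  - intros k Hk. rewrite H by lia. reflexivity.
Qed.

Lemma sum_single (f : nat -> C) (m n : nat) : (m <= n)%nat ->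
  (forall k, k <> m -> (k <= n)%nat -> f k = RtoC 0) -> sum_n_m (G := C_AbelianMonoid) f 0 n = f m.
Proof.
  intros Hm H. induction n as [|n IH].
  - assert (m = 0)%nat by lia. subst. apply sum_n_n.
  - rewrite sum_n_Sm by lia. change (plus ?a ?b) with (a + b).
    destruct (Nat.eq_dec m (S n)) as [e|e].
    + subst m. rewrite sum_zero. { change (@eq C (RtoC 0 + f (S n)) (f (S n))). ring. }
      intros k Hk. apply H; lia.
    + rewrite IH by (try lia; intros; apply H; lia). rewrite (H (S n)) by lia.
      change (@eq C (f m + RtoC 0) (f m)). ring.
Qed.

Lemma omega_q_ne1 (N m k : nat) : (m < N)%nat -> (k < N)%nat -> k <> m ->
  P (omega N) (N - m + k) <> RtoC 1.
Proof.
  intros Hm Hk Hkm.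
  destruct (lt_dec (N - m + k) N) as [h|h].
  - apply omega_ne1. lia.
  - replace (N - m + k)%nat with (N + (k - m))%nat by lia.
    rewrite P_add, omega_N by lia.
    change (mult ?x ?y) with (x * y). assert (X : forall u : C, RtoC 1 * u = u) by (intro; ring). rewrite X.
    apply omega_ne1. lia.
Qed.

Lemma cauchy_est (b : nat -> C) (rho M : R) (G : C -> C) :
  (0 < rho)%R ->
  ex_series (fun k => Cmod (b k) * rho ^ k)%R ->
  (forall z, Cmod z = rho -> is_series (K := C_AbsRing) (V := C_NormedModule) (fun k => b k * P z k) (G z)) ->
  (forall z, Cmod z = rho -> (Cmod (G z) <= M)%R) ->
  forall m, (Cmod (b m) * rho ^ m <= M)%R.
Proof.
  intros Hrho Hr Hser Hbd m.
  apply Rnot_lt_le. intros Hlt.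
  assert (Heps : (0 < (Cmod (b m) * rho ^ m - M) / 2)%R) by lra.
  set (r := (fun k => Cmod (b k) * rho ^ k)%R) in Hr.
  set (eps := mkposreal _ Heps).
  destruct (@Cauchy_ex_series R_AbsRing R_CompleteNormedModule r Hr eps) as [N0 HN0].
  set (N' := max N0 m). set (N := S N').
  assert (HN : (0 < N)%nat) by (unfold N; lia).
  assert (HmN : (m < N)%nat) by (unfold N, N'; lia).
  set (w := omega N).
  set (c := fun j => P (P w (N - m)) j).
  set (A := sum_n (G := C_AbelianMonoid) (fun j => c j * G (RtoC rho * P w j)) N').
  assert (Hz : forall j, Cmod (RtoC rho * P w j) = rho).
  { intros j. rewrite Cmod_mult, Cmod_R, Rabs_pos_eq by lra. unfold w. rewrite Cmod_omega_pow. ring. }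
  set (T := fun k => b k * RtoC (rho ^ k) * Ssum N (N - m + k)).
  assert (HA : is_series (K := C_AbsRing) (V := C_NormedModule) T A).
  { eapply is_series_ext; [|apply (series_fsum (fun j k => c j * (b k * P (RtoC rho * P w j) k))
                                    (fun j => c j * G (RtoC rho * P w j)))].
    - intros k. unfold T, Ssum. replace (N - 1)%nat with N' by (unfold N; lia).
      unfold sum_n. rewrite <- (sum_n_m_mult_l (K := C_Ring)).
      apply sum_n_m_ext. intros j. change (mult ?x ?y) with (x * y). unfold c.
      rewrite P_mul, P_R, !P_P. rewrite (Nat.mul_comm j k).
      rewrite (Nat.mul_add_distr_r (N - m) k j), P_add. unfold w. Cring.
    - intros j. apply (is_series_scal (c j) _ _ (Hser _ (Hz j))). }
  assert (HAup : (Cmod A <= INR N * M)%R).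
  { unfold A. eapply Rle_trans; [apply (norm_sum_n_m (K := C_AbsRing) (V := C_NormedModule))|].
    change norm with Cmod.
    eapply Rle_trans; [apply (sum_n_m_le _ (fun _ => M))|].
    - intros j. rewrite Cmod_mult. unfold c. rewrite P_P. unfold w. rewrite Cmod_omega_pow.
      rewrite Rmult_1_l. apply Hbd. apply Hz.
    - rewrite sum_n_m_const. replace (S N' - 0)%nat with N by (unfold N; lia). lra. }
  assert (HINR : (0 < INR N)%R) by (apply lt_0_INR; lia).
  assert (HAlow : forall n, (N <= n)%nat ->
            (INR N * (Cmod (b m) * rho ^ m) - INR N * eps <= Cmod (sum_n (G := C_AbelianMonoid) T n))%R).
  { intros n Hn. unfold sum_n. rewrite (sum_n_m_Chasles T 0 N' n) by (unfold N in Hn; lia).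
    change (plus ?x ?y) with (x + y).
    rewrite (sum_single T m N').
    2: { unfold N'; lia. }
    2: { intros k Hk HkN. unfold T. rewrite Ssum_0 by (auto; apply omega_q_ne1; unfold N in *; lia).
         change (@eq C (b k * RtoC (rho ^ k) * RtoC 0) (RtoC 0)). ring. }
    assert (HTm : Cmod (T m) = (INR N * (Cmod (b m) * rho ^ m))%R).
    { unfold T. replace (N - m + m)%nat with N by lia. rewrite Ssum_N by (auto; apply omega_N; auto).
      rewrite !Cmod_mult, !Cmod_R, !Rabs_pos_eq; [ring| |]. lra. apply pow_le; lra. }
    assert (HY : (Cmod (sum_n_m (G := C_AbelianMonoid) T (S N') n) <= INR N * eps)%R).
    { eapply Rle_trans; [apply (norm_sum_n_m (K := C_AbsRing) (V := C_NormedModule))|].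
      change norm with Cmod.
      eapply Rle_trans; [apply (sum_n_m_le _ (fun k => INR N * r k)%R)|].
      - intros k. unfold T, r. rewrite !Cmod_mult, Cmod_R, Rabs_pos_eq by (apply pow_le; lra).
        pose proof (Cmod_Ssum N (N - m + k) HN). pose proof (Cmod_ge_0 (b k)).
        assert (0 <= Cmod (b k) * rho ^ k)%R by (apply Rmult_le_pos; [auto|apply pow_le; lra]).
        nra.
      - rewrite (sum_n_m_ext _ (fun k => mult (INR N) (r k))) by reflexivity.
        rewrite (sum_n_m_mult_l (K := R_Ring)). change (mult ?x ?y) with (x * y)%R.
        apply Rmult_le_compat_l; [lra|].
        specialize (HN0 (S N') n ltac:(unfold N'; lia) ltac:(unfold N in Hn; unfold N'; lia)).
        change norm with Rabs in HN0. apply Rlt_le. eapply Rle_lt_trans; [apply Rle_abs|exact HN0]. }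
    assert (Tri := Cmod_triangle (T m + sum_n_m (G := C_AbelianMonoid) T (S N') n) (- sum_n_m (G := C_AbelianMonoid) T (S N') n)).
    rewrite Cmod_opp in Tri.
    assert (X : forall u v : C, u + v + - v = u) by (intros; ring). rewrite X in Tri.
    lra. }
  pose proof (Cseries_ge _ _ _ N HA HAlow) as Hge.
  unfold eps in Hge. cbn [pos] in Hge. nra.
Qed.


Lemma bernoulli (t : R) (k : nat) : (0 <= t <= 1)%R -> (1 - INR k * t <= (1 - t) ^ k)%R.
Proof.
  intros Ht. induction k as [|k IH].
  - simpl. lra.
  - rewrite S_INR. simpl. assert (0 <= 1 - t)%R by lra.
    assert (0 <= INR k * t * t)%R by (pose proof (pos_INR k); apply Rmult_le_pos; [apply Rmult_le_pos|]; lra).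
    nra.
Qed.

Lemma le_half_of_pow (X : R) (k : nat) : (0 <= X)%R ->
  (forall rho, (0 < rho < 1)%R -> (X * rho ^ k <= / 2)%R) -> (X <= / 2)%R.
Proof.
  intros HX H. apply Rnot_lt_le. intros Hlt.
  set (q := (/ 2 / X)%R).
  assert (Hq : (0 < q < 1)%R).
  { unfold q. split. apply Rdiv_lt_0_compat; lra.
    apply (Rmult_lt_reg_r X); [lra|]. field_simplify; lra. }
  set (t := ((1 - q) / (2 * (INR k + 1)))%R).
  assert (Hk : (0 <= INR k)%R) by apply pos_INR.
  assert (Ht : (0 < t <= 1/2)%R).
  { unfold t. split. apply Rdiv_lt_0_compat; lra.
    apply (Rmult_le_reg_r (2 * (INR k + 1))); [lra|]. field_simplify; lra. }
  assert (B := bernoulli t k ltac:(lra)).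
  assert (Hkt : (INR k * t < 1 - q)%R).
  { unfold t. apply (Rmult_lt_reg_r (2 * (INR k + 1))); [lra|]. field_simplify; nra. }
  specialize (H (1 - t)%R ltac:(lra)).
  assert (q < (1 - t) ^ k)%R by lra.
  assert (X * q < X * (1 - t) ^ k)%R by (apply Rmult_lt_compat_l; lra).
  unfold q in *. replace (X * (/ 2 / X))%R with (/ 2)%R in * by (field; lra). lra.
Qed.

Section Main.
Variables (f phi : C -> C) (a : nat -> C).
Hypothesis ha0 : a 0%nat = 0.
Hypothesis hf : forall z : C, disk 1 z ->
          is_series (K := C_AbsRing) (V := C_NormedModule)
            (fun k => a k * pow_n (K := C_Ring) z k) (f z).
Hypothesis hphib : forall z : C, disk 1 z -> (Cmod (phi z) <= 1)%R.
Hypothesis hrel : forall z : C, disk 1 z ->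
            exists df : C,
              is_derive (K := C_AbsRing) (V := C_NormedModule) f z df /\
              z * df - f z = / 2 * (z * z) * phi z.

Lemma G_series (z : C) : (Cmod z < 1)%R ->
  is_series (K := C_AbsRing) (V := C_NormedModule)
    (fun k => (RtoC (INR k) - 1) * a k * P z k) (/ 2 * (z * z) * phi z).
Proof.
  intros Hz.
  destruct (deriv_series a f hf z Hz) as [Dz [HD HDd]].
  destruct (hrel z Hz) as [df [Hdf Erel]].
  rewrite (deriv_unique _ _ _ _ Hdf HDd) in Erel. rewrite <- Erel.
  eapply is_series_ext; [|exact (is_series_minus _ _ _ _ (is_series_scal z _ _ HD) (hf z Hz))].
  intros k. change (plus ?x ?y) with (x + y). change (opp ?x) with (- x). change (scal ?x ?y) with (x * y).
  destruct k as [|k].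
  - simpl. Cring.
  - replace (S k - 1)%nat with k by lia. rewrite P_S. Cring.
Qed.

Lemma coef_bound (k : nat) : (2 <= k)%nat -> (Cmod (a k) <= / (2 * INR (k - 1)))%R.
Proof.
  intros Hk.
  set (b := fun k => (RtoC (INR k) - 1) * a k).
  assert (Hb : forall rho, (0 < rho < 1)%R -> (Cmod (b k) * rho ^ k <= / 2)%R).
  { intros rho Hrho.
    assert (Hrad := radius_ge_1 a f hf).
    assert (Hex : ex_series (fun k => Cmod (b k) * rho ^ k)%R).
    { apply (@ex_series_le R_AbsRing R_CompleteNormedModule _ (fun k => rho * (INR k * Cmod (a k) * rho ^ (k - 1)))%R).
      - intros j. change norm with Rabs. unfold b.
        rewrite Rabs_pos_eq by (apply Rmult_le_pos; [apply Cmod_ge_0|apply pow_le; lra]).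
        destruct j as [|j].
        + rewrite ha0. rewrite Cmult_0_r, Cmod_0. simpl. lra.
        + replace (S j - 1)%nat with j by lia. rewrite Cmod_mult.
          replace (RtoC (INR (S j)) - 1) with (RtoC (INR j)) by (rewrite S_INR, RtoC_plus; ring).
          rewrite Cmod_R, Rabs_pos_eq by apply pos_INR. rewrite S_INR. simpl.
          pose proof (Cmod_ge_0 (a (S j))). pose proof (pos_INR j). assert (0 <= rho ^ j)%R by (apply pow_le; lra).
          assert (0 <= Cmod (a (S j)) * (rho * rho ^ j))%R by (apply Rmult_le_pos; [lra|apply Rmult_le_pos; lra]). nra.
      - apply (ex_series_scal (K := R_AbsRing) (V := R_NormedModule) rho). apply abs_series1.
        + intros; apply Cmod_ge_0.
        + lra.
        + exact Hrad. }
    assert (H := cauchy_est b rho (rho ^ 2 / 2)%R (fun z => / 2 * (z * z) * phi z) ltac:(lra) Hex).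
    eapply Rle_trans; [apply H|].
    - intros z Hz. apply G_series. lra.
    - intros z Hz. rewrite !Cmod_mult, Hz. rewrite Cmod_inv by (intro h; injection h; lra).
      rewrite Cmod_R, Rabs_pos_eq by lra. pose proof (hphib z ltac:(unfold disk; lra)).
      pose proof (Cmod_ge_0 (phi z)). assert (0 <= rho * rho)%R by nra. simpl. nra.
    - assert (rho ^ 2 <= 1)%R by (simpl; nra). lra. }
  apply le_half_of_pow in Hb; [|apply Cmod_ge_0].
  unfold b in Hb. rewrite Cmod_mult in Hb.
  replace (RtoC (INR k) - 1) with (RtoC (INR (k - 1))) in Hb.
  2: { replace k with (S (k - 1)) at 2 by lia. rewrite S_INR, RtoC_plus. ring. }
  rewrite Cmod_R, Rabs_pos_eq in Hb by apply pos_INR.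
  assert (HI : (0 < INR (k - 1))%R) by (apply lt_0_INR; lia).
  apply (Rmult_le_reg_l (INR (k - 1))); auto.
  replace (INR (k - 1) * / (2 * INR (k - 1)))%R with (/ 2)%R by (field; lra). exact Hb.
Qed.
End Main.


Lemma sum_le_loc (u v : nat -> R) (m n : nat) :
  (forall k, (m <= k <= n)%nat -> (u k <= v k)%R) -> (sum_n_m u m n <= sum_n_m v m n)%R.
Proof.
  intros H.
  rewrite (sum_n_m_ext_loc u (fun k => if andb (Nat.leb m k) (Nat.leb k n) then u k else v k)).
  - apply sum_n_m_le. intros k. destruct (andb (Nat.leb m k) (Nat.leb k n)) eqn:E.
    + apply andb_prop in E. destruct E as [E1 E2]. apply Nat.leb_le in E1, E2. apply H. lia.
    + lra.
  - intros k Hk. assert (E : andb (Nat.leb m k) (Nat.leb k n) = true).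
    { apply andb_true_intro. split; apply Nat.leb_le; lia. }
    rewrite E. reflexivity.
Qed.

Lemma id_deriv (z : C) : is_derive (K := C_AbsRing) (V := C_NormedModule) (fun w => w) z (RtoC 1).
Proof.
  apply (deriv_quad _ _ _ 1 0); [lra|]. intros w _.
  replace (w - z - (w - z) * RtoC 1) with (RtoC 0) by ring. rewrite Cmod_R, Rabs_R0. lra.
Qed.

Lemma id_convex (r : R) : convex_in_disk r (fun z => z).
Proof.
  split; [|split].
  - intros z _. exists (RtoC 1). apply id_deriv.
  - intros z w _ _ h. exact h.
  - intros z w t Hz Hw Ht. exists (RtoC (1 - t) * z + RtoC t * w). split; [|reflexivity].
    unfold disk in *. eapply Rle_lt_trans; [apply Cmod_triangle|].
    rewrite !Cmod_mult, !Cmod_R, !Rabs_pos_eq by lra.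
    pose proof (Cmod_ge_0 z). pose proof (Cmod_ge_0 w).
    assert (0 <= (1 - t) * (r - Cmod z))%R by (apply Rmult_le_pos; lra).
    assert (0 <= t * (r - Cmod w))%R by (apply Rmult_le_pos; lra).
    destruct (Rle_lt_dec t (1/2)).
    + assert (0 < (1 - t) * (r - Cmod z))%R by (apply Rmult_lt_0_compat; lra). nra.
    + assert (0 < t * (r - Cmod w))%R by (apply Rmult_lt_0_compat; lra). nra.
Qed.

Theorem theorem2p3
  (f phi : C -> C) (a : nat -> C) (rS : R)
  (ha0 : a 0%nat = 0) (ha1 : a 1%nat = 1)
  (hf : forall z : C, disk 1 z ->
          is_series (K := C_AbsRing) (V := C_NormedModule)
            (fun k => a k * pow_n (K := C_Ring) z k) (f z))
  (hphi : analytic_on_disk 1 phi)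
  (hphib : forall z : C, disk 1 z -> (Cmod (phi z) <= 1)%R)
  (hrel : forall z : C, disk 1 z ->
            exists df : C,
              is_derive (K := C_AbsRing) (V := C_NormedModule) f z df /\
              z * df - f z = / 2 * (z * z) * phi z)
  (hrS : (0 < rS < 1)%R)
  (hrSeq : ((1 - rS) * ln (1 - rS) + 2 - 3 * rS = 0)%R) :
  forall n : nat, (2 <= n)%nat ->
    close_to_convex_in_disk rS (partial_sum a n).
Proof.
  intros n Hn. exists (fun z => z). split; [apply id_convex|].
  intros z Hz. unfold disk in Hz.
  set (S := sum_n_m (G := C_AbelianMonoid) (fun k => RtoC (INR k) * a k * P z (k - 1)) 2 n).
  exists (RtoC 1 + S), (RtoC 1). split; [|split].
  - unfold partial_sum.
    apply (@is_derive_plus C_AbsRing C_NormedModule (fun z => z)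
             (fun z => sum_n_m (fun k => a k * pow_n (K := C_Ring) z k) 2 n) z (RtoC 1) S).
    + apply id_deriv.
    + apply poly_deriv.
  - apply id_deriv.
  - replace ((RtoC 1 + S) / RtoC 1) with (RtoC 1 + S) by (field; intro h; injection h; lra).
    assert (HS : (Cmod S < 1)%R).
    { unfold S. eapply Rle_lt_trans; [apply (norm_sum_n_m (K := C_AbsRing) (V := C_NormedModule))|].
      change norm with Cmod.
      eapply Rle_lt_trans; [apply (sum_le_loc _ (fun k => INR k / (2 * INR (k - 1)) * Cmod z ^ (k - 1))%R)|].
      - intros k Hk. rewrite !Cmod_mult, Cmod_R, Rabs_pos_eq by apply pos_INR. rewrite Cmod_P.
        pose proof (coef_bound f phi a ha0 hf hphib hrel k ltac:(lia)).
        pose proof (pos_INR k). assert (0 <= Cmod z ^ (k - 1))%R by (apply pow_le; apply Cmod_ge_0).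
        unfold Rdiv. rewrite (Rmult_comm (INR k)).
        assert (INR k * Cmod (a k) <= INR k * / (2 * INR (k - 1)))%R by (apply Rmult_le_compat_l; lra).
        nra.
      - apply (final_real rS (Cmod z) n hrS hrSeq). split; [apply Cmod_ge_0|exact Hz]. }
    change (Re (RtoC 1 + S)) with (1 + Re S)%R.
    pose proof (re_le_Cmod S).
    assert (- Re S <= Rabs (Re S))%R by (rewrite <- Rabs_Ropp; apply Rle_abs).
    lra.
Qed.
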